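(* Let $S$ be an instance of Max Lin-2 AA with $m$ equations in which no two equations have the same left-hand side, and let $\rho$ be the maximum over variables $z_i$ of the number of equations of $S$ containing $z_i$. Run the variant of Algorithm $\mathcal{A}$ in which, in step (2), an arbitrary variable still occurring in $S$ is chosen and marked. Then after the first $k-1$ iterations at most $2\rho(k-1)$ equations have been deleted from $S$ in total (by marking or by the combining rule). Consequently, if $2\rho(k-1)<m$, the algorithm marks $k$ equations.
   Context: Max Lin-2 AA: an instance is a system $S$ of $m$ linear equations over $\mathbb{F}_2$ in variables $z_1,\dots,z_n$, Equation $j$ being $\sum_{i\in\alpha_j} z_i=b_j$ with $\emptyset\neq\alpha_j\subseteq\{1,\dots,n\}$, $b_j\in\mathbb{F}_2$, positive integer weight $w_j$, and a nonnegative integer parameter $k$. Combining rule: if two equations $\sum_{i\in\alpha}z_i=b'$ (weight $w'$) and $\sum_{i\in\alpha}z_i=b''$ (weight $w''$) have the same left-hand side, replace them by one equation with that left-hand side: if $b'=b''$, with right-hand side $b'$ and weight $w'+w''$; otherwise, the one of larger weight, with new weight $|w'-w''|$; an equation of resulting weight $0$ is deleted. Algorithm $\mathcal{A}$: initially nothing is marked. While $S\neq\emptyset$ and fewer than $k$ equations are marked: (1) for each $i$ compute $\rho_i$, the number of equations currently in $S$ containing $z_i$; (2) choose a variable $z_l$ still occurring in $S$ with minimum $\rho_l$ and mark it; (3) choose an arbitrary equation $\sum_{i\in\alpha}z_i=b$ of $S$ containing $z_l$; (4) mark this equation and delete it from $S$; (5) replace every other equation $\sum_{i\in\alpha'}z_i=b'$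 of $S$ containing $z_l$ by $\sum_{i\in\alpha\triangle\alpha'}z_i=b+b'$ (keeping its weight), where $\triangle$ is symmetric difference; (6) apply the combining rule exhaustively (deleting equations of weight $0$). *)

(* Defs.v *)
From mathcomp Require Import all_boot.
From Stdlib Require Import Relation_Operators.
Set Implicit Arguments. Unset Strict Implicit. Unset Printing Implicit Defensive.

(* An equation  sum_{i in alpha} z_i = b  with weight w, over variables z_0..z_{n-1}
   (0-based indexing of the variables z_1..z_n). *)
Definition lineq (n : nat) : Type := ({set 'I_n} * bool * nat)%type.
Definition lhs n (e : lineq n) : {set 'I_n} := e.1.1.
Definition rhs n (e : lineq n) : bool := e.1.2.
Definition wt  n (e : lineq n) : nat := e.2.

Definition symdiff n (A B : {set 'I_n}) : {set 'I_n} := (A :\: B) :|: (B :\: A).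

Definition combine n (e1 e2 : lineq n) : seq (lineq n) :=
  if rhs e1 == rhs e2 then [:: (lhs e1, rhs e1, wt e1 + wt e2)]
  else if wt e1 == wt e2 then [::]   (* resulting weight 0: deleted *)
  else if wt e2 < wt e1 then [:: (lhs e1, rhs e1, wt e1 - wt e2)]
  else [:: (lhs e1, rhs e2, wt e2 - wt e1)].

Definition combine_step n (S S' : seq (lineq n)) : Prop :=
  exists s1 s2 s3 e1 e2,
    S = s1 ++ e1 :: s2 ++ e2 :: s3 /\ lhs e1 = lhs e2 /\
    S' = s1 ++ s2 ++ s3 ++ combine e1 e2.

Definition combine_exhaust n (S S' : seq (lineq n)) : Prop :=
  clos_refl_trans _ (@combine_step n) S S' /\ uniq (map (@lhs n) S').

Definition alg_step n (S S' : seq (lineq n)) : Prop :=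
  exists s1 e s2 (l : 'I_n),
    S = s1 ++ e :: s2 /\ l \in lhs e /\
    combine_exhaust
      (map (fun e' => if l \in lhs e' then (symdiff (lhs e) (lhs e'), rhs e (+) rhs e', wt e')
                      else e') (s1 ++ s2)) S'.

(* run k S0 j S : starting from S0, after j iterations (j equations marked)
   the system is S; the loop only continues while S <> [] and fewer than k marked. *)
Inductive run n (k : nat) (S0 : seq (lineq n)) : nat -> seq (lineq n) -> Prop :=
| run0 : run k S0 0 S0
| runS j S S' : run k S0 j S -> j < k -> S != [::] -> alg_step S S' -> run k S0 j.+1 S'.

Definition halted n (k j : nat) (S : seq (lineq n)) : bool := (S == [::]) || (k <= j).

Definition rho n (S : seq (lineq n)) : nat :=
  \max_(i < n) count (fun e : lineq n => i \in lhs e) S.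

(* Main.v *)
Require Import Defs.
From mathcomp Require Import all_boot.
From Stdlib Require Import Relation_Operators.
Set Implicit Arguments. Unset Strict Implicit. Unset Printing Implicit Defensive.

Section Aux.
Variable n : nat.
Implicit Types (u v x y : {set 'I_n}).

Lemma symdiffE u v i : (i \in symdiff u v) = (i \in u) (+) (i \in v).
Proof. rewrite /symdiff !inE; by case: (i \in u); case: (i \in v). Qed.

Lemma symdiff0 u v : symdiff u v = set0 -> u = v.
Proof.
move=> H; apply/setP => i; move/setP: H => /(_ i); rewrite symdiffE inE.
by case: (i \in u); case: (i \in v).
Qed.

Lemma symdiffxx u : symdiff u u = set0.
Proof. by apply/setP => i; rewrite symdiffE inE; case: (i \in u). Qed.

Lemma symdiffAA a u v : symdiff (symdiff a u) (symdiff a v) = symdiff u v.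
Proof. by apply/setP => i; rewrite !symdiffE; case: (i \in a); case: (i \in u); case: (i \in v). Qed.

Lemma symdiff_set0 u : symdiff u set0 = u.
Proof. by apply/setP => i; rewrite !symdiffE inE; case: (i \in u). Qed.

End Aux.

Lemma combine_lhs n (e1 e2 : lineq n) : all (fun x => lhs x == lhs e1) (combine e1 e2).
Proof. by rewrite /combine; repeat case: ifP => _; rewrite /= ?eqxx. Qed.

Lemma step_sub n (X Y : seq (lineq n)) : combine_step X Y -> {subset map (@lhs n) Y <= map (@lhs n) X}.
Proof.
move=> [s1 [s2 [s3 [e1 [e2 [-> [E ->]]]]]]] h.
rewrite !map_cat /= !map_cat !mem_cat /= !inE !mem_cat /= => H.
have [Hc|Hn] := boolP (h \in map (@lhs n) (combine e1 e2)).
  move/mapP: Hc => [x Hx ->]; have := allP (combine_lhs e1 e2) x Hx => /eqP ->.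
  by rewrite eqxx !orbT.
move: H; rewrite (negbTE Hn) orbF.
by rewrite inE; case/or3P => ->; rewrite ?orbT.
Qed.

Lemma step_count n (X Y : seq (lineq n)) h : combine_step X Y ->
  count (fun x => lhs x == h) X = 1 -> count (fun x => lhs x == h) Y = 1.
Proof.
move=> [s1 [s2 [s3 [e1 [e2 [-> [E ->]]]]]]].
rewrite !count_cat /= !count_cat /= -E.
case: (boolP (lhs e1 == h)) => H.
  by move=> /eqP; rewrite /= !add1n !addnS.
have -> : count (fun x => lhs x == h) (combine e1 e2) = 0.
  apply/eqP; rewrite -leqn0 leqNgt -has_count; apply/hasPn => x Hx.
  by have := allP (combine_lhs e1 e2) x Hx => /eqP ->.
by rewrite /= !add0n addn0 addnA.
Qed.

Lemma rt_sub n (X Y : seq (lineq n)) : clos_refl_trans _ (@combine_step n) X Y ->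
  {subset map (@lhs n) Y <= map (@lhs n) X}.
Proof.
elim => [x y /step_sub //| x //| x y z _ H1 _ H2 h Hh]; by apply/H1/H2.
Qed.

Lemma rt_count n (X Y : seq (lineq n)) h : clos_refl_trans _ (@combine_step n) X Y ->
  count (fun x => lhs x == h) X = 1 -> count (fun x => lhs x == h) Y = 1.
Proof.
induction 1 as [x y H1| x | x y z _ H1 _ H2]; [exact: step_count | by [] | by move=> Hc; apply/H2/H1].
Qed.

Definition Inv n (S0 S : seq (lineq n)) (j : nat) :=
 exists (L : {set 'I_n} -> {set 'I_n}) (P : {set 'I_n}),
 [/\ #|P| <= j, L set0 = set0,
  (forall x y, x :&: P = y :&: P -> symdiff (L x) (L y) = symdiff x y),
  uniq (map (@lhs n) S) &
  ((forall h, h \in map (@lhs n) S -> exists2 x, x \in map (@lhs n) S0 & h = L x) /\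
  (forall x, x \in map (@lhs n) S0 -> L x != set0 ->
     (forall y, y \in map (@lhs n) S0 -> L y = L x -> y = x) -> L x \in map (@lhs n) S))].

Lemma inv0 n (S0 : seq (lineq n)) : uniq (map (@lhs n) S0) -> Inv S0 S0 0.
Proof.
move=> Hu; exists id, set0; split => //; first by rewrite cards0.
by split => // h Hh; exists h.
Qed.

Lemma inv_step n (S0 S S' : seq (lineq n)) j : Inv S0 S j -> alg_step S S' -> Inv S0 S' j.+1.
Proof.
move=> [L [P [HP HL0 HLd Hu [Hc Hb]]]] [s1 [e [s2 [l [ES [Hl [Hrt Hu']]]]]]].
pose T := fun u : {set 'I_n} => if l \in u then symdiff (lhs e) u else u.
have Tmap : map (@lhs n) (map (fun e' => if l \in lhs e' then (symdiff (lhs e) (lhs e'), rhs e (+) rhs e', wt e')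
                      else e') (s1 ++ s2)) = map T (map (@lhs n) (s1 ++ s2)).
  by rewrite -!map_comp; apply: eq_map => z /=; rewrite /T; case: ifP.
have T0 : T set0 = set0 by rewrite /T inE.
have Huu : uniq (lhs e :: map (@lhs n) (s1 ++ s2)).
  have Hp : perm_eq ([:: lhs e] ++ map (@lhs n) s1 ++ map (@lhs n) s2)
                    (map (@lhs n) s1 ++ [:: lhs e] ++ map (@lhs n) s2) by rewrite perm_catCA.
  rewrite map_cat -cat1s (perm_uniq Hp); by move: Hu; rewrite ES map_cat.
have Hsub : {subset map (@lhs n) (s1 ++ s2) <= map (@lhs n) S}.
  by move=> u; rewrite ES !map_cat !mem_cat /= inE => /orP[->|->]; rewrite ?orbT.
exists (T \o L), (l |: P); split.
- by rewrite cardsU1 -add1n; apply: leq_add => //; apply: leq_b1.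
- by rewrite /= HL0.
- move=> x y Hxy.
  have Hxy' : x :&: P = y :&: P.
    apply/setP => i; move/setP: Hxy => /(_ i); rewrite !inE.
    by case: (i == l) => //=; case: (i \in P); rewrite ?andbT ?andbF.
  have Hlxy : (l \in x) = (l \in y).
    by move/setP: Hxy => /(_ l); rewrite !inE eqxx !andbT.
  have HD := HLd x y Hxy'.
  have HlL : (l \in L x) = (l \in L y).
    have : (l \in symdiff (L x) (L y)) = (l \in symdiff x y) by rewrite HD.
    rewrite !symdiffE Hlxy addbb.
    by case: (l \in L x); case: (l \in L y).
  rewrite /= /T -HlL; case: ifP => _; last by [].
  by rewrite symdiffAA.
- exact: Hu'.
split.
- move=> h /(rt_sub Hrt); rewrite Tmap => /mapP [u Hu1 ->].
  have [x Hx ->] := Hc u (Hsub u Hu1).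
  by exists x.
- move=> x Hx /= TLx0 iso'.
  have LX0 : L x != set0 by apply: contraNneq _ TLx0 => E; rewrite /= E T0.
  have iso : forall y, y \in map (@lhs n) S0 -> L y = L x -> y = x.
    by move=> y Hy E; apply: iso' => //=; rewrite E.
  have Lxin := Hb x Hx LX0 iso.
  have Lxe : L x != lhs e.
    apply: contraNneq _ TLx0 => E; by rewrite /= E /T Hl symdiffxx.
  have Lxin' : L x \in map (@lhs n) (s1 ++ s2).
    move: Lxin; rewrite ES !map_cat !mem_cat /= inE (negbTE Lxe) /=.
    by [].
  have Hcnt : count (fun z => lhs z == T (L x))
     (map (fun e' => if l \in lhs e' then (symdiff (lhs e) (lhs e'), rhs e (+) rhs e', wt e')
                      else e') (s1 ++ s2)) = 1.
    rewrite -(count_map (@lhs n) (fun u => u == T (L x))) Tmap count_map.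
    have -> : count (preim T (fun u => u == T (L x))) (map (@lhs n) (s1 ++ s2))
            = count (pred1 (L x)) (map (@lhs n) (s1 ++ s2)).
      apply: eq_in_count => u Hu1 /=.
      apply/eqP/eqP => [E|->] //.
      have [y Hy Ey] := Hc u (Hsub u Hu1).
      by rewrite Ey; congr L; apply: iso' => //; rewrite -Ey.
    rewrite count_uniq_mem ?Lxin' //.
    by move: Huu; rewrite cons_uniq => /andP[].
  have := rt_count Hrt Hcnt => H1.
  have : has (fun z => lhs z == T (L x)) S' by rewrite has_count H1.
  by move/hasP => [z Hz /eqP <-]; apply: map_f.
Qed.

Lemma inv_run n k (S0 S : seq (lineq n)) j : uniq (map (@lhs n) S0) -> run k S0 j S -> Inv S0 S j.
Proof.
move=> Hu; elim => [|j' S1 S2 _ IH _ _ Hs]; first exact: inv0.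
exact: inv_step IH Hs.
Qed.

Lemma run_le n k (S0 S : seq (lineq n)) j : run k S0 j S -> j <= k.
Proof. by elim. Qed.

Lemma card_bigcup_le (T I : finType) (P : pred I) (F : I -> {set T}) :
  #|\bigcup_(i | P i) F i| <= \sum_(i | P i) #|F i|.
Proof.
apply: (big_ind2 (fun (X : {set T}) (m : nat) => #|X| <= m)) => //.
- by rewrite cards0.
- move=> X1 m1 X2 m2 H1 H2; rewrite cardsU.
  apply: leq_trans (leq_subr _ _) _; exact: leq_add.
Qed.

Lemma count_bound n (S0 S' : seq (lineq n)) (L : {set 'I_n} -> {set 'I_n}) (P : {set 'I_n}) :
  uniq (map (@lhs n) S0) -> all (fun e => lhs e != set0) S0 -> L set0 = set0 ->
  (forall x y, x :&: P = y :&: P -> symdiff (L x) (L y) = symdiff x y) ->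
  (forall x, x \in map (@lhs n) S0 -> L x != set0 ->
     (forall y, y \in map (@lhs n) S0 -> L y = L x -> y = x) -> L x \in map (@lhs n) S') ->
  size S0 - size S' <= 2 * rho S0 * #|P|.
Proof.
move=> Hu Hne HL0 HLd Hb.
set s := map (@lhs n) S0.
pose A := [set x in s].
have cardA : #|A| = size S0.
  by rewrite cardsE; move/card_uniqP: Hu => ->; rewrite size_map.
have neA : forall x, x \in A -> x != set0.
  move=> x; rewrite inE => /mapP [e He ->]; exact: (allP Hne e He).
have Psep : forall x y, x :&: P = y :&: P -> L x = L y -> x = y.
  by move=> x y Hxy E; apply: symdiff0; rewrite -HLd // E symdiffxx.
pose I := [set x in A | (L x != set0) && [forall y in A, (L y == L x) ==> (y == x)]].
have IA : I \subset A by apply/subsetP => x; rewrite inE => /andP[].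
have cardI : #|I| <= size S'.
  rewrite -(card_in_imset (f := L) (D := mem I)); last first.
    move=> x y Hx Hy E; move: Hx; rewrite inE => /and3P [_ _ /forall_inP Hx].
    have Hy' : y \in A by move: Hy; rewrite inE => /andP[].
    by apply/eqP; rewrite eq_sym; apply: (implyP (Hx y Hy')); rewrite E.
  rewrite -(size_map (@lhs n) S'); apply: (leq_trans _ (card_size _)).
  apply: subset_leq_card; apply/subsetP => h /imsetP [x Hx ->].
  move: Hx; rewrite inE => /and3P [HxA HL /forall_inP Hx].
  apply: Hb => //; first by move: HxA; rewrite inE.
  move=> y Hy E; apply/eqP; apply: (implyP (Hx y _)); first by rewrite inE.
  by rewrite E.
have step1 : size S0 - size S' <= #|A :\: I|.
  rewrite cardsD (setIidPr IA) cardA; exact: leq_sub2l.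
pose B := [set x in A | x :&: P != set0].
pose Z := [set x in A :\: I | x :&: P == set0].
have sub1 : A :\: I \subset B :|: Z.
  apply/subsetP => x Hx; apply/setUP.
  have HxA : x \in A by move: Hx; rewrite in_setD => /andP[].
  case: (boolP (x :&: P == set0)) => H0; [right | left]; rewrite in_set.
    by rewrite Hx H0.
  by rewrite HxA H0.
pose g := fun x => odflt x [pick y in A | (y != x) && (L y == L x)].
have gZ : forall x, x \in Z -> [/\ g x \in A, g x != x & L (g x) = L x].
  move=> x; rewrite in_set in_setD => /andP [/andP [HxI HxA] H0].
  have HxL : L x != set0.
    apply: (contraNneq _ (neA x HxA)) => E; apply/eqP; apply: Psep; last by rewrite E HL0.
    by rewrite (eqP H0) set0I.
  rewrite in_set HxA HxL /= in HxI.
  rewrite /g; case: pickP => [y /andP [HyA /andP [Hyx /eqP HyL]] | Hn] /=.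
    by split.
  exfalso; move/negP: HxI; apply; apply/forall_inP => y Hy; apply/implyP => E.
  by have := Hn y; rewrite Hy E andbT /= => /negbFE.
have cardZ : #|Z| <= #|B|.
  rewrite -(card_in_imset (f := g) (D := mem Z)); last first.
    move=> x y Hx Hy E.
    have [_ _ Lx] := gZ x Hx; have [_ _ Ly] := gZ y Hy.
    apply: Psep; last by rewrite -Lx -Ly E.
    move: Hx Hy; rewrite !inE => /andP[_ /eqP ->] /andP[_ /eqP ->] //.
  apply: subset_leq_card; apply/subsetP => h /imsetP [x Hx ->].
  have [HgA Hgx Lg] := gZ x Hx.
  rewrite inE HgA /=; apply: contra Hgx => /eqP Hg0; apply/eqP.
  apply: Psep => //; move: Hx; rewrite !inE => /andP[_ /eqP ->]; by rewrite Hg0.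
have cardB : #|B| <= #|P| * rho S0.
  have : B \subset \bigcup_(i in P) [set x in A | i \in x].
    apply/subsetP => x; rewrite inE => /andP [HxA HxP].
    have [i Hi] := set0Pn _ HxP; move: Hi; rewrite inE => /andP [Hix HiP].
    by apply/bigcupP; exists i => //; rewrite inE HxA.
  move/subset_leq_card => H; apply: (leq_trans H); apply: (leq_trans (card_bigcup_le _ _)).
  rewrite -sum_nat_const; apply: leq_sum => i _.
  have H1 : #|[set x in A | i \in x]| <= count (fun x : {set 'I_n} => i \in x) s.
    have -> : [set x in A | i \in x] = [set x in filter (fun x : {set 'I_n} => i \in x) s].
      by apply/setP => x; rewrite !inE mem_filter andbC.
    by rewrite cardsE -size_filter card_size.
  apply: (leq_trans H1).
  rewrite /s count_map; exact: (leq_bigmax (F := fun i => count (fun e : lineq n => i \in lhs e) S0) i).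
apply: (leq_trans step1); apply: (leq_trans (subset_leq_card sub1)).
rewrite cardsU; apply: (leq_trans (leq_subr _ _)).
rewrite -mulnA mul2n -addnn mulnC; apply: leq_add => //.
exact: leq_trans cardZ cardB.
Qed.

Theorem mainTheorem6 (n : nat) (S : seq (lineq n)) (k : nat) :
  all (fun e : lineq n => (lhs e != set0) && (0 < wt e)) S ->
  uniq (map (@lhs n) S) ->
  (forall j S', j <= k - 1 -> run k S j S' -> size S - size S' <= 2 * rho S * (k - 1)) /\
  (2 * rho S * (k - 1) < size S ->
     forall j S', run k S j S' -> halted k j S' -> j = k).
Proof.
move=> Hall Hu.
have Hne : all (fun e => lhs e != set0) S.
  by apply: sub_all Hall => e /andP[].
have P1 : forall j S', j <= k - 1 -> run k S j S' -> size S - size S' <= 2 * rho S * (k - 1).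
  move=> j S' Hj Hr.
  have [L [P [HP HL0 HLd Hu' [Hc Hb]]]] := inv_run Hu Hr.
  apply: leq_trans (count_bound Hu Hne HL0 HLd Hb) _.
  by rewrite leq_mul2l (leq_trans HP Hj) orbT.
split => //.
move=> Hlt j S' Hr Hh.
have Hjk := run_le Hr.
have [Hkj|Hjk'] := leqP k j; first by apply/eqP; rewrite eqn_leq Hjk Hkj.
move: Hh; rewrite /halted leqNgt Hjk' orbF => /eqP E.
have := P1 j S' _ Hr; rewrite E /= subn0.
have -> : j <= k - 1 by rewrite leq_subRL ?add1n // (leq_ltn_trans _ Hjk').
by move=> /(_ isT) H; move: (leq_ltn_trans H Hlt); rewrite ltnn.
Qed.
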